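(* Let $X$ be a continuous real-valued random variable and fix an integer $K \ge 1$. For each $n > K$, let $Z = Z_n$ be the random variable produced by the SMOTE-$K$ procedure (described in the context) from an i.i.d. sample $X_1, \dots, X_n$ drawn from $X$. Then $Z$ converges to $X$ in probability as $n \to \infty$.
   Context: SMOTE-$K$ procedure: given a sample $X_1,\dots,X_n$ of real numbers and a rank $1 \le K \le n-1$: (1) choose an index $i$ uniformly at random from $\{1,\dots,n\}$; (2) find the $K$ nearest neighbors $X_{i,(1)}, \dots, X_{i,(K)}$ of $X_i$ among the other sample points $\{X_j: j\ne i\}$, where $X_{i,(k)}$ realizes the $k$-th smallest of the distances $|X_j - X_i|$, $j\neq i$; (3) choose one of them, $X_{i,(k)}$, uniformly at random; (4) draw $\lambda \sim U(0,1)$ independently; (5) output $Z = X_i + \lambda (X_{i,(k)} - X_i)$. The random variable $X$ appearing in the conclusion is taken to be the sample point $X_i$ from which $Z$ is generated (which has the distribution of $X$), so the convergence means $P(|Z - X_i| > \varepsilon) \to 0$ for every $\varepsilon > 0$. *)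

(* Defs.v *)
From HB Require Import structures.
From mathcomp Require Import all_boot all_order all_algebra.
From mathcomp Require Import all_classical all_reals all_analysis.
Set Implicit Arguments. Unset Strict Implicit. Unset Printing Implicit Defensive.
Import Order.TTheory GRing.Theory Num.Theory.
Local Open Scope ring_scope.
Local Open Scope classical_set_scope.

Section Smote.
Variable R : realType.

Definition others (s : seq R) (i : nat) : seq R :=
  [seq s`_j | j <- iota 0 (size s) & j != i].

(* the (k+1)-th nearest neighbour of s`_i among the other points
   (k is 0-based: k = 0 is the nearest neighbour); ties in the distance are
   broken by the (stable) sort, i.e. by sample index *)
Definition knn (s : seq R) (i k : nat) : R :=
  nth 0 (sort (fun a b => `|a - s`_i| <= `|b - s`_i|) (others s i)) k.

Definition smote (s : seq R) (i k : nat) (l : R) : R :=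
  s`_i + l * (knn s i k - s`_i).

End Smote.

(* Main.v *)
Require Import Defs.
From HB Require Import structures.
From mathcomp Require Import all_boot all_order all_algebra.
From mathcomp Require Import all_classical all_reals all_analysis.
From mathcomp Require Import ring lra zify.
From Stdlib Require Import Lia.
Set Implicit Arguments. Unset Strict Implicit. Unset Printing Implicit Defensive.
Import Order.TTheory GRing.Theory Num.Theory.
Local Open Scope ring_scope.
Local Open Scope classical_set_scope.

Section Pure.
Variable R : realType.

Lemma sorted_nth_count (f : R -> R) (s : seq R) (k : nat) (r : R) :
  sorted (fun a b => f a <= f b) s -> (k < size s)%N ->
  (r < f (nth 0 s k)) = (count (fun y => (f y <= r)%R) s <= k)%N.
Proof.
have tr : transitive (fun a b : R => f a <= f b).
  by move=> y x z /= h1 h2; exact: le_trans h1 h2.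
elim: s k => [//|x s IH] k /= Hs Hk.
have Hall := order_path_min tr Hs.
have Hs' : sorted (fun a b => f a <= f b) s := path_sorted Hs.
have allgt : r < f x -> count (fun y => (f y <= r)%R) s = 0%N.
  move=> rx; apply/eqP; rewrite -leqn0 leqNgt -has_count; apply/negP => /hasP [y ys fy].
  move/allP: Hall => /(_ y ys) /= fxy.
  by move: (lt_le_trans rx fxy); rewrite ltNge fy.
case: k Hk => [|k] Hk /=.
  by case: (ltP r (f x)) => rx //; rewrite allgt.
rewrite IH //.
case: (ltP r (f x)) => rx.
  by rewrite allgt.
by rewrite add1n ltnS.
Qed.

Lemma div_block (b L j : nat) : (b * L <= j < b * L + L)%N -> (j %/ L)%N = b.
Proof.
move=> /andP [h1 h2].
have L0 : (0 < L)%N by case: L h1 h2 => [|L]; [rewrite muln0 addn0; lia|].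
rewrite -(subnKC h1) divnMDl // divn_small ?addn0 //.
by rewrite ltn_subLR.
Qed.

Lemma pigeon (n K L i : nat) (p : pred nat) :
  (K * L <= n)%N ->
  (forall b, (b < K)%N -> exists j, [&& (b * L <= j < b * L + L)%N, j != i & p j]) ->
  (K <= count p [seq j <- iota 0 n | j != i])%N.
Proof.
move=> KL H.
have H' : forall b, exists j, (b < K)%N -> [&& (b * L <= j < b * L + L)%N, j != i & p j].
  move=> b; case: (ltnP b K) => bK; last by exists 0%N.
  by case: (H b bK) => j hj; exists j.
case: (choice H') => f Hf.
have -> : K = size [seq f b | b <- iota 0 K] by rewrite size_map size_iota.
rewrite -size_filter; apply: uniq_leq_size.
  rewrite map_inj_in_uniq ?iota_uniq // => b1 b2; rewrite !mem_iota !add0n => h1 h2 e.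
  have /and3P [q1 _ _] := Hf b1 (andP h1).2; have /and3P [q2 _ _] := Hf b2 (andP h2).2.
  by rewrite -(div_block q1) -(div_block q2) e.
move=> y /mapP [b]; rewrite mem_iota add0n => /andP [_ hb] ->.
have /and3P [/andP [q1 q2] q3 q4] := Hf b hb.
rewrite !mem_filter q4 q3 mem_iota add0n /=.
apply: (leq_trans q2); apply: (leq_trans _ KL).
by rewrite -mulSnr leq_mul2r hb orbT.
Qed.

Lemma count_blk (n L b i : nat) : ((b * L + L) <= n)%N ->
  (L - 1 <= count (fun j => (b * L <= j < b * L + L)%N && (j != i)) (iota 0 n))%N.
Proof.
move=> h.
have -> : iota 0 n = iota 0 (b * L) ++ iota (b * L) L ++ iota (b * L + L) (n - (b * L + L)).
  by rewrite -iotaD -iotaD addnA subnKC.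
rewrite !count_cat.
have -> : count (fun j => (b * L <= j < b * L + L)%N && (j != i)) (iota (b * L) L)
          = count (fun j => j != i) (iota (b * L) L).
  by apply: eq_in_count => j; rewrite mem_iota => ->.
have e := count_predC (pred1 i) (iota (b * L) L).
have u := count_uniq_mem i (iota_uniq (b * L) L).
rewrite size_iota in e.
have : (count (pred1 i) (iota (b * L) L) <= 1)%N by rewrite u; case: (_ \in _).
move: e; rewrite (_ : count (predC (pred1 i)) (iota (b * L) L) = count (fun j => j != i) (iota (b * L) L)) //.
lia.
Qed.

Lemma prod_le_pow (r : seq nat) (a : nat -> R) (Q : pred nat) (c : R) :
  0 <= c -> (forall j, 0 <= a j <= 1) -> (forall j, Q j -> a j = c) ->
  \prod_(j <- r) a j <= c ^+ count Q r.
Proof.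
move=> c0 ha hQ; elim: r => [|x r IH]; first by rewrite big_nil expr0.
rewrite big_cons /=.
have p0 : 0 <= \prod_(j <- r) a j by apply: prodr_ge0 => j _; case/andP: (ha j).
case Qx: (Q x) => /=.
  by rewrite hQ // exprS ler_wpM2l.
rewrite add0n; apply: le_trans IH; apply: ler_piMl => //; by case/andP: (ha x).
Qed.

Lemma prod_bound (r : seq nat) (i : nat) (a : nat -> R) (Q : pred nat) (c : R) :
  uniq r -> i \in r -> 0 <= c -> (forall j, 0 <= a j <= 1) ->
  (forall j, Q j -> j != i -> a j = c) ->
  \prod_(j <- r) a j <= a i * c ^+ count (fun j => Q j && (j != i)) r.
Proof.
move=> ur ir c0 ha hQ; rewrite (bigD1_seq i) //=.
apply: ler_wpM2l; first by case/andP: (ha i).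
rewrite -big_filter.
have -> : count (fun j => Q j && (j != i)) r = count (fun j => Q j && (j != i)) [seq j <- r | j != i].
  rewrite count_filter; apply: eq_count => j /=.
  by case: (j != i); rewrite ?andbT ?andbF.
apply: prod_le_pow => // j /andP [Qj ji]; exact: hQ.
Qed.
End Pure.

Section Prob.
Local Open Scope ereal_scope.
Variables (R : realType) (d : measure_display) (T : measurableType d)
  (P : probability T R).

Lemma le_P_big (J : Type) (r : seq J) (F : J -> set T) (A : set T) :
  measurable A -> (forall j, measurable (F j)) ->
  A `<=` \big[setU/set0]_(j <- r) F j -> P A <= \sum_(j <- r) P (F j).
Proof.
elim: r A => [|x r IH] A mA mF sub.
  rewrite big_nil in sub; rewrite big_nil.
  by move: sub; rewrite subset0 => ->; rewrite measure0.
rewrite big_cons in sub; rewrite big_cons.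
have mU : measurable (\big[setU/set0]_(j <- r) F j) by apply: bigsetU_measurable.
apply: (le_trans (le_measure _ _ _ sub)); rewrite ?inE //; first exact: measurableU.
apply: (le_trans (measureU2 _ _ _)) => //.
by apply: leeD2l; apply: IH.
Qed.

Lemma mem_bigsetU (J : eqType) (r : seq J) (F : J -> set T) x w :
  x \in r -> F x w -> (\big[setU/set0]_(y <- r) F y) w.
Proof.
elim: r => [//|y r IH]; rewrite inE big_cons => /orP [/eqP <-|xr] Fw.
  by left.
by right; apply: IH.
Qed.

Lemma bigsetU_mem (J : eqType) (r : seq J) (F : J -> set T) w :
  (\big[setU/set0]_(y <- r) F y) w -> exists2 x, x \in r & F x w.
Proof.
elim: r => [|y r IH]; rewrite ?big_nil ?big_cons //.
case=> [h|/IH [x xr h]]; first by exists y; rewrite ?inE ?eqxx.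
by exists x; rewrite // inE xr orbT.
Qed.

Lemma fin01 (A : set T) : measurable A ->
  P A = (fine (P A))%:E /\ (0 <= fine (P A) <= 1)%R.
Proof.
move=> mA.
have h0 : 0 <= P A := measure_ge0 _ _.
have h1 : P A <= 1 := probability_le1 _ mA.
have fA : P A \is a fin_num by rewrite ge0_fin_numE // (le_lt_trans h1) // ltry.
split; first by rewrite fineK.
by rewrite -lee_fin -(lee_fin _ 1) fineK // h0 h1.
Qed.

End Prob.

Section Main.
Variables (R : realType) (d : measure_display) (T : measurableType d)
  (P : probability T R) (X : {RV P >-> R}) (K : nat)
  (Xs : nat -> {RV P >-> R}) (Idx : nat -> {RV P >-> nat})
  (kap : nat -> {RV P >-> nat}) (lam : nat -> {RV P >-> R}).
Hypothesis K1 : (1 <= K)%N.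
Hypothesis hXs : forall (j : nat) (B : set R), measurable B ->
     P (Xs j @^-1` B) = P (X @^-1` B).
Hypothesis hI : forall n i, (K < n)%N -> (i < n)%N -> P (Idx n @^-1` [set i]) = (n%:R^-1)%:E.
Hypothesis hIn : forall n w, (K < n)%N -> (Idx n w < n)%N.
Hypothesis hk : forall n k, (K < n)%N -> (k < K)%N -> P (kap n @^-1` [set k]) = (K%:R^-1)%:E.
Hypothesis hkn : forall n w, (K < n)%N -> (kap n w < K)%N.
Hypothesis hlam : forall n (B : set R), (K < n)%N -> measurable B ->
     P (lam n @^-1` B) = lebesgue_measure (B `&` `[0, 1]).
Hypothesis hind : forall n (B : nat -> set R) (i k : nat) (L : set R), (K < n)%N ->
     (forall j, measurable (B j)) -> measurable L ->
     P ((\bigcap_(j in [set j | (j < n)%N]) (Xs j @^-1` B j))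
          `&` (Idx n @^-1` [set i]) `&` (kap n @^-1` [set k]) `&` (lam n @^-1` L))
     = ((\prod_(j < n) P (Xs j @^-1` B j)) * P (Idx n @^-1` [set i])
          * P (kap n @^-1` [set k]) * P (lam n @^-1` L))%E.

Local Open Scope ereal_scope.
Definition rect n (B : nat -> set R) i :=
  (\bigcap_(j in [set j | (j < n)%N]) (Xs j @^-1` B j)) `&` (Idx n @^-1` [set i]).

Lemma mrect n B i : (forall j, measurable (B j)) -> measurable (rect n B i).
Proof.
move=> mB; apply: measurableI.
  by apply: bigcap_measurableType => j _; apply: measurable_funPTI.
exact: measurable_funPTI.
Qed.

Lemma P_rect n B i : (K < n)%N -> (i < n)%N -> (forall j, measurable (B j)) ->
  P (rect n B i) <= ((\prod_(j < n) fine (P (X @^-1` B j))) / n%:R)%:E.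
Proof.
move=> Kn iN mB.
have sub : rect n B i `<=` \big[setU/set0]_(k <- index_iota 0 K)
    (rect n B i `&` (kap n @^-1` [set k]) `&` (lam n @^-1` setT)).
  move=> w rw; apply: (mem_bigsetU (x:=kap n w)).
    by rewrite mem_index_iota hkn.
  by split => //; split.
apply: (le_trans (le_P_big P _ _ sub)).
- exact: mrect.
- move=> k; apply: measurableI; last exact: measurable_funPTI.
  by apply: measurableI; [exact: mrect|exact: measurable_funPTI].
rewrite big_seq_cond.
rewrite (eq_bigr (fun _ => ((\prod_(j < n) fine (P (X @^-1` B j))) / n%:R / K%:R)%:E)); last first.
  move=> k; rewrite andbT mem_index_iota => /andP [_ kK].
  rewrite /rect hind //.
  rewrite hI // hk // preimage_setT probability_setT mule1.
  rewrite (eq_bigr (fun j : 'I_n => (fine (P (X @^-1` B j)))%:E)); last first.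
    by move=> j _; rewrite hXs //; rewrite -(fin01 P (measurable_funPTI X (mB j))).1.
  by rewrite prodEFin -!EFinM.
rewrite -big_seq_cond sumEFin sumr_const_nat subn0 lee_fin.
have -> : forall x : R, (x / K%:R *+ K = x)%R.
  by move=> x; rewrite -mulr_natr mulfVK // pnatr_eq0 -lt0n.
by [].
Qed.

Definition bad (eps : R) n := [set w | (eps < `| smote [seq Xs j w | j <- iota 0 n]
   (Idx n w) (kap n w) (lam n w) - Xs (Idx n w) w |)%R].

Lemma bad_char (eps : R) n w : (0 < eps)%R -> (K < n)%N ->
  bad eps n w <-> (lam n w != 0%R /\
   (count (fun j => `|Xs j w - Xs (Idx n w) w| * `|lam n w| <= eps)%R
      [seq j <- iota 0 n | j != Idx n w] <= kap n w)%N).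
Proof.
move=> e0 Kn.
have iN := hIn w Kn; have kK := hkn w Kn.
rewrite /bad /=.
set i := Idx n w; set k := kap n w; set l := lam n w.
set s := [seq Xs j w | j <- iota 0 n].
have sj : forall j, (j < n)%N -> s`_j = Xs j w.
  by move=> j jn; rewrite (nth_map 0%N) ?size_iota // nth_iota // add0n.
have si := sj i iN.
have -> : (smote s i k l - Xs i w = l * (knn s i k - s`_i))%R.
  by rewrite /smote si addrAC subrr add0r.
rewrite normrM.
set f := fun y : R => (`|y - s`_i| : R)%R.
have -> : `|knn s i k - s`_i|%R = f (nth 0%R (sort (fun a b => f a <= f b)%R (others s i)) k) by [].
have srt : sorted (fun a b => f a <= f b)%R (sort (fun a b => f a <= f b)%R (others s i)).
  by apply: sort_sorted => a b; exact: le_total.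
have szs : size s = n by rewrite size_map size_iota.
have szo : size (sort (fun a b => f a <= f b)%R (others s i)) = n.-1.
  rewrite size_sort /others size_map size_filter szs.
  have e := count_predC (pred1 i) (iota 0 n).
  have u := count_uniq_mem i (iota_uniq 0 n).
  rewrite size_iota mem_iota add0n iN /= in e u.
  rewrite (_ : count (fun j => j != i) (iota 0 n) = count (predC (pred1 i)) (iota 0 n)) //.
  move: e; rewrite (_ : count (pred1 i) (iota 0 n) = 1%N) // add1n => e.
  by rewrite -[in RHS]e.
have kN : (k < n.-1)%N by rewrite -ltnS prednK; [lia|lia].
case: (eqVneq l 0%R) => [->|l0].
  rewrite normr0 mul0r; split => [h|[//]]; by move: (lt_trans e0 h); rewrite ltxx.
have nl : (0 < `|l|)%R by rewrite normr_gt0.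
rewrite mulrC -ltr_pdivrMr // sorted_nth_count //; last by rewrite szo.
rewrite (permP (permEl (perm_sort _ _))) /others count_map szs.
have -> : count (preim (nth 0%R s) (fun y => f y <= eps / `|l|)%R) [seq j <- iota 0 n | j != i]
   = count (fun j => `|Xs j w - Xs i w| * `|l| <= eps)%R [seq j <- iota 0 n | j != i].
  apply: eq_in_count => j; rewrite mem_filter mem_iota add0n => /andP [_ jn] /=.
  by rewrite /f /= ler_pdivlMr // sj // -si.
by split => [h|[]].
Qed.

Lemma mcount (js : seq nat) (p : nat -> T -> bool) (k : nat) :
  (forall j, measurable [set w | p j w]) ->
  measurable [set w | (count (fun j => p j w) js <= k)%N].
Proof.
move=> mp; elim: js k => [|x js IH] k.
  by rewrite (_ : [set w | _] = setT) //; apply/seteqP; split => w //=.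
case: k => [|k].
  rewrite (_ : [set w | _] = ~` [set w | p x w] `&` [set w | (count (fun j => p j w) js <= 0)%N]).
    by apply: measurableI => //; apply: measurableC.
  apply/seteqP; split => w /=; case: (p x w) => /=; rewrite ?add1n ?add0n //.
  - by move=> [].
  - by move=> [].
rewrite (_ : [set w | _] = ([set w | p x w] `&` [set w | (count (fun j => p j w) js <= k)%N])
   `|` (~` [set w | p x w] `&` [set w | (count (fun j => p j w) js <= k.+1)%N])).
  by apply: measurableU; apply: measurableI => //; apply: measurableC.
apply/seteqP; split => w /=; case: (p x w) => /=.
- by rewrite add1n ltnS => h; left.
- by rewrite add0n => h; right.
- by rewrite add1n ltnS => -[[]|[]].
- by rewrite add0n => -[[]|[]].
Qed.

Lemma mle (g : T -> R) (eps : R) : measurable_fun setT g ->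
  measurable [set w | (g w <= eps)%R].
Proof.
move=> mg.
have := mg measurableT `]-oo, eps]%classic (measurable_itv _).
rewrite setTI; congr measurable; apply/seteqP; split => w /=; by rewrite in_itv.
Qed.

Lemma mbad (eps : R) n : (0 < eps)%R -> (K < n)%N -> measurable (bad eps n).
Proof.
move=> e0 Kn.
have -> : bad eps n = \big[setU/set0]_(i <- iota 0 n) \big[setU/set0]_(k <- iota 0 K)
   (Idx n @^-1` [set i] `&` kap n @^-1` [set k] `&` ~` (lam n @^-1` [set 0%R]) `&`
    [set w | (count (fun j => `|Xs j w - Xs i w| * `|lam n w| <= eps)%R
      [seq j <- iota 0 n | j != i] <= k)%N]).
  apply/seteqP; split => w.
    move=> /(bad_char _ e0 Kn) [l0 c].
    apply: (mem_bigsetU (x := Idx n w)); first by rewrite mem_iota add0n hIn.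
    apply: (mem_bigsetU (x := kap n w)); first by rewrite mem_iota add0n hkn.
    split; [split; [split|]|] => //=; by move=> /eqP; rewrite (negbTE l0).
  move=> /bigsetU_mem [i _] /bigsetU_mem [k _] [[[/= hi hk0] hl] hc].
  apply/(bad_char _ e0 Kn); rewrite hi hk0; split => //.
  by apply/eqP.
apply: bigsetU_measurable => i _; apply: bigsetU_measurable => k _.
apply: measurableI; last first.
  apply: mcount => j; apply: mle.
  apply: (measurable_realfun.measurable_funM (f := fun w => `|Xs j w - Xs i w|%R)
     (g := fun w => `|lam n w|%R)).
    apply: (measurableT_comp (f := @Num.norm _ R) (g := fun w => (Xs j w - Xs i w)%R)).
      exact: measurable_realfun.normr_measurable.
    exact: measurable_realfun.measurable_funB.
  apply: (measurableT_comp (f := @Num.norm _ R) (g := lam n)).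
    exact: measurable_realfun.normr_measurable.
  exact: measurable_funP.
apply: measurableI; last by apply: measurableC; apply: measurable_funPTI.
by apply: measurableI; apply: measurable_funPTI.
Qed.

Lemma pow_anti (c : R) (m k : nat) : (0 <= c <= 1)%R -> (m <= k)%N -> (c ^+ k <= c ^+ m)%R.
Proof.
move=> /andP [c0 c1] mk; rewrite -(subnKC mk) exprD.
by apply: ler_piMr; [exact: exprn_ge0|exact: exprn_ile1].
Qed.

Variable eps : R.
Hypothesis e0 : (0 < eps)%R.

Definition Aset (N : nat) := [set x : R | (- (N%:R * eps) <= x < N%:R * eps)%R].
Definition cl (N t : nat) : R := ((t%:R - N%:R) * eps)%R.
Definition Cset (N t : nat) := [set x : R | (cl N t <= x < cl N t + eps)%R].

Lemma mAset N : measurable (Aset N).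
Proof.
rewrite (_ : Aset N = `[(- (N%:R * eps))%R, (N%:R * eps)%R[%classic); first exact: measurable_itv.
by apply/seteqP; split => x /=; rewrite in_itv.
Qed.

Lemma mCset N t : measurable (Cset N t).
Proof.
rewrite (_ : Cset N t = `[cl N t, (cl N t + eps)%R[%classic); first exact: measurable_itv.
by apply/seteqP; split => x /=; rewrite in_itv.
Qed.

Definition pC N t := fine (P (X @^-1` Cset N t)).
Definition qA N := fine (P (X @^-1` ~` Aset N)).
Definition blk (L b j : nat) := (b * L <= j < b * L + L)%N.
Definition B0 N (i j : nat) := if j == i then ~` Aset N else setT.
Definition Bt N L t b (i j : nat) := if j == i then Cset N t else if blk L b j then ~` Cset N t else setT.

Lemma mB0 N i j : measurable (B0 N i j).
Proof. rewrite /B0; case: (j == i) => //; apply: measurableC; exact: mAset. Qed.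

Lemma mBt N L t b i j : measurable (Bt N L t b i j).
Proof.
rewrite /Bt; case: (j == i); first exact: mCset.
case: (blk L b j) => //; apply: measurableC; exact: mCset.
Qed.

Lemma prod_ord (n : nat) (a : nat -> R) : (\prod_(j < n) a j = \prod_(j <- iota 0 n) a j)%R.
Proof. by rewrite -(big_mkord xpredT) /index_iota subn0. Qed.

Lemma a01 (B : set R) : measurable B -> (0 <= fine (P (X @^-1` B)) <= 1)%R.
Proof. by move=> mB; have [] := fin01 P (measurable_funPTI X mB). Qed.

Lemma P_rect0 n N i : (K < n)%N -> (i < n)%N ->
  P (rect n (B0 N i) i) <= (qA N / n%:R)%:E.
Proof.
move=> Kn iN; apply: (le_trans (P_rect Kn iN (mB0 N i))); rewrite lee_fin.
apply: ler_wpM2r; first by rewrite invr_ge0.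
rewrite (prod_ord n (fun j => fine (P (X @^-1` B0 N i j)))).
apply: (le_trans (prod_bound (Q := pred0) (c := 1%R) (i := i) (iota_uniq 0 n) _ _ _ _)).
- by rewrite mem_iota add0n.
- by [].
- by move=> j; apply: a01; exact: mB0.
- by [].
by rewrite expr1n mulr1 /B0 eqxx.
Qed.

Lemma P_rectt n N t b i : (K < n)%N -> (i < n)%N -> (b < K)%N ->
  P (rect n (Bt N (n %/ K) t b i) i) <=
    (pC N t * (1 - pC N t) ^+ (n %/ K - 1) / n%:R)%:E.
Proof.
move=> Kn iN bK; apply: (le_trans (P_rect Kn iN (mBt N _ t b i))); rewrite lee_fin.
apply: ler_wpM2r; first by rewrite invr_ge0.
have /andP [p0 p1] := a01 (mCset N t).
set L := (n %/ K)%N.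
rewrite (prod_ord n (fun j => fine (P (X @^-1` Bt N L t b i j)))).
apply: (le_trans (prod_bound (Q := blk L b) (c := (1 - pC N t)%R) (i := i) (iota_uniq 0 n) _ _ _ _)).
- by rewrite mem_iota add0n.
- by rewrite subr_ge0.
- by move=> j; apply: a01; exact: mBt.
- move=> j Qj ji; rewrite /Bt (negbTE ji) Qj preimage_setC probability_setC; last first.
    exact: measurable_funPTI (mCset N t).
  by rewrite (fin01 P (measurable_funPTI X (mCset N t))).1 -EFinB.
rewrite /Bt eqxx -/(pC N t); apply: ler_wpM2l => //.
apply: pow_anti; first by rewrite subr_ge0 p1 lerBlDr lerDl p0.
apply: count_blk.
rewrite -mulSnr; apply: (leq_trans _ (leq_trunc_div n K)).
by rewrite mulnC leq_mul2l bK orbT.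
Qed.

Lemma cover n N : (K < n)%N ->
  bad eps n `<=` (lam n @^-1` ~` `[0%R, 1%R]%classic) `|`
   \big[setU/set0]_(i <- iota 0 n) (rect n (B0 N i) i `|`
     \big[setU/set0]_(t <- iota 0 (2 * N)) \big[setU/set0]_(b <- iota 0 K)
        rect n (Bt N (n %/ K) t b i) i).
Proof.
move=> Kn w bw.
have [l0 hc] := (bad_char w e0 Kn).1 bw.
have kK := hkn w Kn.
move: l0 hc kK; set i := Idx n w; set k := kap n w; set l := lam n w => l0 hc kK.
case: (pselect (`[0%R, 1%R]%classic l)) => l01; last by left.
right; apply: (mem_bigsetU (x := i)); first by rewrite mem_iota add0n hIn.
have ri : forall B, (forall j, (j < n)%N -> B j (Xs j w)) -> rect n B i w.
  by move=> B hB; split => // j /= jn; exact: hB.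
case: (pselect (Aset N (Xs i w))) => xA; last first.
  by left; apply: ri => j jn; rewrite /B0; case: eqP => [->|].
right.
move: xA; set x := Xs i w => /andP [xA1 xA2].
have u1 : (- (N%:R) <= x / eps)%R by rewrite ler_pdivlMr // mulNr.
have u2 : (x / eps < N%:R)%R by rewrite ltr_pdivrMr.
have hy : (0 <= x / eps + N%:R)%R by lra.
set t := Num.trunc (x / eps + N%:R).
have /andP [t1 t2] := truncn_itv hy.
rewrite -/t in t1 t2.
have tN : (t < 2 * N)%N.
  by rewrite -(ltr_nat R) natrM; apply: (le_lt_trans t1); lra.
have xC : Cset N t x.
  rewrite /Cset /cl /=; apply/andP; split.
    by rewrite -ler_pdivlMr //; lra.
  rewrite (_ : ((t%:R - N%:R) * eps + eps = (t%:R - N%:R + 1) * eps)%R); last by ring.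
  by rewrite -ltr_pdivrMr //; rewrite -natr1 in t2; lra.
apply: (mem_bigsetU (x := t)); first by rewrite mem_iota add0n.
case: (pselect (exists b, (b < K)%N /\ forall j, blk (n %/ K) b j -> j != i -> ~ Cset N t (Xs j w))) => [[b [bK hb]]|nex].
  apply: (mem_bigsetU (x := b)); first by rewrite mem_iota add0n.
  apply: ri => j jn; rewrite /Bt; case: eqP => [->|/eqP ji] //.
  by case bj: (blk _ b j) => //; exact: hb.
exfalso.
have hK : (K <= count (fun j => cl N t <= Xs j w < cl N t + eps)%R [seq j <- iota 0 n | j != i])%N.
  apply: pigeon; first by rewrite mulnC; exact: leq_trunc_div.
  move=> b bK; apply: contrapT => hn; apply: nex; exists b; split => // j bj ji Cj.
  by apply: hn; exists j; apply/and3P; split.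
have : (K <= count (fun j => `|Xs j w - Xs i w| * `|l| <= eps)%R [seq j <- iota 0 n | j != i])%N.
  apply: (leq_trans hK); apply: sub_count => j /= /andP [c1 c2].
  move: xC l01; rewrite /Cset /= in_itv /= => /andP [c3 c4] /andP [l1 l2].
  have dl : (`|Xs j w - x| < eps)%R by rewrite ltr_norml; apply/andP; split; lra.
  apply: (le_trans (ler_piMr _ _)) => //; first by rewrite ger0_norm.
  exact: ltW.
lia.
Qed.

Lemma sum_iota_const (m : nat) (c : R) : (\sum_(i <- iota 0 m) c = c *+ m)%R.
Proof. by rewrite (_ : iota 0 m = index_iota 0 m) ?sumr_const_nat ?subn0 // /index_iota subn0. Qed.

Definition gt N n t := (pC N t * (1 - pC N t) ^+ (n %/ K - 1))%R.

Lemma main_bound n N : (K < n)%N ->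
  P (bad eps n) <= (qA N + \sum_(t <- iota 0 (2 * N)) (K%:R * gt N n t))%:E.
Proof.
move=> Kn.
have n0 : (n%:R != 0 :> R)%R by rewrite pnatr_eq0 -lt0n; apply: leq_ltn_trans Kn.
set G := (qA N + \sum_(t <- iota 0 (2 * N)) (K%:R * gt N n t))%R.
pose piece i := rect n (B0 N i) i `|`
     \big[setU/set0]_(t <- iota 0 (2 * N)) \big[setU/set0]_(b <- iota 0 K)
        rect n (Bt N (n %/ K) t b i) i.
have mbt : forall i t, measurable (\big[setU/set0]_(b <- iota 0 K) rect n (Bt N (n %/ K) t b i) i).
  by move=> i t; apply: bigsetU_measurable => b _; apply: mrect => j; exact: mBt.
have mbT : forall i, measurable (\big[setU/set0]_(t <- iota 0 (2 * N)) \big[setU/set0]_(b <- iota 0 K)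
        rect n (Bt N (n %/ K) t b i) i).
  by move=> i; apply: bigsetU_measurable => t _; exact: mbt.
have mpiece : forall i, measurable (piece i).
  move=> i; apply: measurableU; last exact: mbT.
  by apply: mrect => j; exact: mB0.
have mU : measurable (\big[setU/set0]_(i <- iota 0 n) piece i).
  by apply: bigsetU_measurable => i _.
have cv := cover N Kn.
set Lb := (lam n @^-1` _) in cv.
have mL : measurable Lb.
  by apply: measurable_funPTI; apply: measurableC; exact: measurable_itv.
have h0 : P Lb = 0.
  etransitivity; first exact: (hlam Kn (measurableC (measurable_itv `[0%R, 1%R]%R))).
  by rewrite setICl measure0.
apply: (le_trans (le_measure _ _ _ cv)); rewrite ?inE //.
  exact: mbad.
  exact: measurableU.
apply: (le_trans (measureU2 _ _ _)) => //.
apply: (@le_trans _ _ (0 + P (\big[setU/set0]_(i <- iota 0 n) piece i))).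
  apply: leeD2r; rewrite le_eqVlt; apply/orP; left; apply/eqP; exact: h0.
rewrite add0e.
apply: (le_trans (le_P_big P (r := iota 0 n) (F := piece) mU mpiece (fun w h => h))).
apply: (@le_trans _ _ (\sum_(i <- iota 0 n) (G / n%:R)%:E)).
  rewrite big_seq [X in (_ <= X)%E]big_seq; apply: lee_sum => i; rewrite mem_iota add0n => iN.
  apply: (le_trans (measureU2 _ _ _)) => //; first by apply: mrect => j; exact: mB0.
  rewrite /G mulrDl EFinD; apply: leeD; first exact: P_rect0.
  apply: (le_trans (le_P_big P (r := iota 0 (2 * N)) (mbT i) (fun t => mbt i t) (fun w h => h))).
  apply: (@le_trans _ _ (\sum_(t <- iota 0 (2 * N)) ((gt N n t / n%:R) *+ K)%:E)).
    rewrite big_seq [X in (_ <= X)%E]big_seq; apply: lee_sum => t; rewrite mem_iota add0n => tN.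
    apply: (le_trans (le_P_big P (r := iota 0 K) (F := fun b => rect n (Bt N (n %/ K) t b i) i) (mbt i t) _ (fun w h => h))).
      by move=> b; apply: mrect => j; exact: mBt.
    rewrite -sum_iota_const -sumEFin big_seq [X in (_ <= X)%E]big_seq.
    apply: lee_sum => b; rewrite mem_iota add0n => bK.
    exact: P_rectt.
  rewrite sumEFin lee_fin le_eqVlt; apply/orP; left; apply/eqP.
  rewrite big_distrl /=; apply: eq_bigr => t _.
  by rewrite -mulr_natl mulrA.
rewrite sumEFin sum_iota_const lee_fin.
by rewrite -(mulr_natr (G / n%:R)) divfK.
Qed.

Lemma qA_lim (dl : R) : (0 < dl)%R -> exists N, (qA N <= dl)%R.
Proof.
move=> dl0.
pose F N := X @^-1` Aset N.
have mF : forall N, measurable (F N) by move=> N; exact: measurable_funPTI (mAset N).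
have UF : \bigcup_N F N = setT.
  apply/seteqP; split => // w _.
  have h0 : (0 <= `|X w| / eps)%R by rewrite divr_ge0 // ltW.
  exists (Num.trunc (`|X w| / eps)).+1 => //.
  have /andP [_ h2] := truncn_itv h0.
  move: h2; rewrite ltr_pdivrMr // => h2.
  rewrite /F /Aset /=.
  move: h2; set M := ((Num.trunc _).+1%:R * eps)%R => h2.
  by move: h2; rewrite ltr_norml => /andP [h3 h4]; rewrite h4 andbT ltW.
have nd : nondecreasing_seq F.
  move=> N M NM; apply/subsetPset => w; rewrite /F /Aset /= => /andP [h1 h2].
  have : (N%:R * eps <= M%:R * eps)%R by rewrite ler_pM2r // ler_nat.
  move=> h; apply/andP; split; first by apply: le_trans h1; rewrite lerN2.
  exact: lt_le_trans h2 h.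
have := @nondecreasing_cvg_mu _ _ _ P F mF _ nd.
rewrite UF => /(_ measurableT).
set u := (_ [set: T]) => h.
have u1 : u = 1 by exact: probability_setT.
move: h; rewrite u1 => /fine_cvgP [_ /cvgrPdist_le] /(_ dl dl0).
case=> N _ HN; exists N; have := HN N (leqnn N) => /= hN.
rewrite /qA preimage_setC probability_setC //.
rewrite (fin01 P (mF N)).1 -EFinB /=.
by apply: le_trans hN; rewrite ler_norm.
exact: mF.
Qed.

Lemma gt_lim N t : (fun n => K%:R * gt N n t)%R @ \oo --> 0%R.
Proof.
have /andP [p0 p1] := a01 (mCset N t).
apply/cvgr0Pnorm_le => e e0'.
have K0 : (0 < K%:R :> R)%R by rewrite ltr0n.
case: (eqVneq (pC N t) 0%R) => [pz|pnz].
  exists 0%N => // n _ /=; rewrite /gt pz mul0r mulr0 normr0; exact: ltW.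
have pp : (0 < pC N t)%R by rewrite lt_neqAle eq_sym pnz.
have hz : (`|1 - pC N t| < 1)%R.
  rewrite ger0_norm ?subr_ge0 //; lra.
have := cvg_expr hz; move=> /cvgr0Pnorm_le /(_ (e / 2 / K%:R)%R) [].
  by rewrite !divr_gt0.
move=> M _ HM; exists ((M.+1) * K)%N => // n /= hn.
have hM : (M <= n %/ K - 1)%N.
  have : (M.+1 <= n %/ K)%N.
    by rewrite -(mulnK M.+1 (leq_trans (leqnn 1) K1)); apply: leq_div2r.
  lia.
have := HM _ hM => /= h.
rewrite /gt normrM ger0_norm ?ltW // normrM (ger0_norm p0).
rewrite -/(pC N t).
have ha : (pC N t * `|(1 - pC N t) ^+ (n %/ K - 1)| <= e / 2 / K%:R)%R.
  by apply: le_trans h; apply: ler_piMl.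
apply: (@le_lt_trans _ _ (K%:R * (e / 2 / K%:R))%R).
  by apply: ler_wpM2l => //; exact: ltW.
rewrite mulrC divfK; last by rewrite gt_eqF.
lra.
Qed.

Lemma sum_lim (r : seq nat) (f : nat -> nat -> R) :
  (forall t, f t @ \oo --> 0%R) -> (fun n => \sum_(t <- r) f t n)%R @ \oo --> 0%R.
Proof.
move=> hf; elim: r => [|x r IH].
  rewrite (_ : (fun n => _) = (fun _ => 0%R)); first exact: cvg_cst.
  by apply: funext => n; rewrite big_nil.
rewrite (_ : (fun n => _) = (fun n => f x n + \sum_(t <- r) f t n)%R); last first.
  by apply: funext => n; rewrite big_cons.
have := cvgD (hf x) IH; rewrite addr0; exact.
Qed.

Lemma final : (fun n => P (bad eps n)) @ \oo --> 0%E.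
Proof.
apply/fine_cvgP; split.
  by exists K.+1 => // n /= Kn; rewrite (fin01 P (mbad e0 Kn)).1.
apply/cvgr0Pnorm_le => dl dl0.
have dl2 : (0 < dl / 2)%R by rewrite divr_gt0.
have [N hN] := qA_lim dl2.
have := sum_lim (iota 0 (2 * N)) (f := fun t n => K%:R * gt N n t)%R (fun t => gt_lim N t).
move=> /cvgr0Pnorm_le /(_ _ dl2) [M _ HM].
exists (maxn M K.+1) => // n /=; rewrite geq_max => /andP [Mn Kn].
have hb := main_bound N Kn.
have [e1 /andP [f0 f1]] := fin01 P (mbad e0 Kn).
rewrite e1 lee_fin in hb.
have hs := HM n Mn; simpl in hs.
rewrite ger0_norm //.
have := ler_norm (\sum_(t <- iota 0 (2 * N)) K%:R * gt N n t)%R.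
lra.
Qed.

End Main.

Theorem corollary2 (R : realType) (d : measure_display) (T : measurableType d)
  (P : probability T R)
  (X : {RV P >-> R})                 (* the continuous random variable X *)
  (K : nat)
  (Xs : nat -> {RV P >-> R})         (* the sample: X_1, ..., X_n are Xs 0, ..., Xs n.-1 *)
  (I : nat -> {RV P >-> nat})        (* I n : the chosen index, uniform on {0,...,n-1} *)
  (kap : nat -> {RV P >-> nat})      (* kap n : the chosen neighbour rank (0-based), uniform on {0,...,K-1} *)
  (lam : nat -> {RV P >-> R})        (* lam n : lambda ~ U(0,1) *)
  :
  (1 <= K)%N ->
  (* X is continuous: no atoms *)
  (forall x : R, P (X @^-1` [set x]) = 0%E) ->
  (* the sample points are distributed as X *)
  (forall (j : nat) (B : set R), measurable B ->
     P (Xs j @^-1` B) = P (X @^-1` B)) ->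
  (* uniform choice of the index *)
  (forall n i, (K < n)%N -> (i < n)%N -> P (I n @^-1` [set i]) = (n%:R^-1)%:E) ->
  (forall n w, (K < n)%N -> (I n w < n)%N) ->
  (* uniform choice of the neighbour rank *)
  (forall n k, (K < n)%N -> (k < K)%N -> P (kap n @^-1` [set k]) = (K%:R^-1)%:E) ->
  (forall n w, (K < n)%N -> (kap n w < K)%N) ->
  (* lambda ~ U(0,1) *)
  (forall n (B : set R), (K < n)%N -> measurable B ->
     P (lam n @^-1` B) = lebesgue_measure (B `&` `[0, 1])) ->
  (* mutual independence of X_1, ..., X_n, the index, the rank and lambda *)
  (forall n (B : nat -> set R) (i k : nat) (L : set R), (K < n)%N ->
     (forall j, measurable (B j)) -> measurable L ->
     P ((\bigcap_(j in [set j | (j < n)%N]) (Xs j @^-1` B j))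
          `&` (I n @^-1` [set i]) `&` (kap n @^-1` [set k]) `&` (lam n @^-1` L))
     = ((\prod_(j < n) P (Xs j @^-1` B j)) * P (I n @^-1` [set i])
          * P (kap n @^-1` [set k]) * P (lam n @^-1` L))%E) ->
  (* conclusion: Z_n - X_{I_n} --> 0 in probability *)
  forall eps : R, 0 < eps ->
    (fun n => P [set w | eps < `| smote [seq Xs j w | j <- iota 0 n] (I n w) (kap n w) (lam n w)
                                  - Xs (I n w) w |])
      @ \oo --> 0%E.
Proof.
move=> K1 _ hXs hI hIn hk hkn hlam hind eps e0.
exact: (final K1 hXs hI hIn hk hkn hlam hind e0).
Qed.
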